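(* Let $\mathcal{C}\subseteq\mathbb{F}_q^n$ be a code with $(r,\delta)$-locality. Let $\mathcal{S}\subseteq[n]$ and let $\Delta$ be a positive integer with $\Delta\le|\mathcal{S}|$. Then there exist subsets $\mathcal{A},\mathcal{T}\subseteq[n]$ such that $$\mathcal{A}\subseteq\mathcal{S}\cap\mathcal{T},\qquad |\mathcal{A}|=(\delta-1)\left\lfloor\frac{\Delta}{r+\delta-1}\right\rfloor,\qquad |\mathcal{S}\cap\mathcal{T}|\le\Delta,$$ and $\mathcal{C}|_{\mathcal{T}}$ is generated by $\mathcal{C}|_{\mathcal{T}\setminus\mathcal{A}}$, i.e., there is a map $\psi$ with $c|_{\mathcal{T}}=\psi(c|_{\mathcal{T}\setminus\mathcal{A}})$ for every $c\in\mathcal{C}$.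
   Context: $[n]=\{1,\dots,n\}$; for $\mathcal{X}\subseteq[n]$, $c|_{\mathcal{X}}$ is the restriction of $c$ to coordinates in $\mathcal{X}$ and $\mathcal{C}|_{\mathcal{X}}=\{c|_{\mathcal{X}}:c\in\mathcal{C}\}$. A code $\mathcal{C}\subseteq\mathbb{F}_q^n$ has $(r,\delta)$-locality (with $r\ge1$, $\delta\ge 2$) if every coordinate $i\in[n]$ lies in a subset $J_i\subseteq[n]$ with $|J_i|\le r+\delta-1$ such that $\mathcal{C}|_{J_i}$ has minimum distance at least $\delta$. *)

(* Defs.v *)
From mathcomp Require Import all_boot all_algebra.
Set Implicit Arguments. Unset Strict Implicit. Unset Printing Implicit Defensive.

(* Codewords of length n over F are finite functions 'I_n -> F
   (coordinates are 0-based: 'I_n stands for [n]). *)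
Definition word (F : finFieldType) (n : nat) := {ffun 'I_n -> F}.

(* Restriction c|_X, represented by zero-padding outside X; this is an
   injective encoding of the tuple (c_i)_{i in X}. *)
Definition restr (F : finFieldType) (n : nat) (X : {set 'I_n}) (c : word F n)
  : word F n := [ffun i => if i \in X then c i else 0%R].

Definition dist_on (F : finFieldType) (n : nat) (X : {set 'I_n}) (c c' : word F n)
  : nat := #|[set i in X | c i != c' i]|.

Definition min_dist_ge (F : finFieldType) (n : nat) (C : {set word F n})
  (X : {set 'I_n}) (d : nat) : Prop :=
  forall c c', c \in C -> c' \in C -> restr X c != restr X c' ->
    d <= dist_on X c c'.

Definition has_locality (F : finFieldType) (n : nat) (C : {set word F n})
  (r delta : nat) : Prop :=
  forall i : 'I_n, exists J : {set 'I_n},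
    [/\ i \in J, #|J| <= r + delta - 1 & min_dist_ge C J delta].

(* Main.v *)
Require Import Defs.
From mathcomp Require Import all_boot all_algebra.
From mathcomp Require Import zify.

Lemma subset_card_ex {T : finType} (U : {set T}) e :
  e <= #|U| -> exists2 B : {set T}, B \subset U & #|B| = e.
Proof.
move=> he; exists [set x in take e (enum U)].
  by apply/subsetP=> x; rewrite inE => /mem_take; rewrite mem_enum.
rewrite cardsE; have /card_uniqP -> : uniq (take e (enum U)).
  by apply: take_uniq; apply: enum_uniq.
by rewrite size_takel // -cardE.
Qed.

Lemma cardU_le {T : finType} (A B : {set T}) : #|A :|: B| <= #|A| + #|B|.
Proof. have := cardsUI A B; lia. Qed.


Lemma arith_step {A e N u x a k d1 r ST : nat} :
  e = minn (N - A) (minn d1 u) -> x = minn (u - e) (d1 - e) ->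
  A < N -> 0 < u -> u <= r + d1 -> ST <= A + a * r -> a <= k ->
  (a * d1 <= A \/ A = N) -> N = d1 * k -> 0 < d1 ->
  let a' := if u - x <= e then a else a.+1 in
  [/\ A + e <= N, a' <= k, ST + (u - x) <= A + e + a' * r,
      (a' * d1 <= A + e \/ A + e = N) & A < A + e].
Proof.
move=> he hx hAN hu huJ hST hak hA hN hd a'.
have ak : a * d1 <= A -> a < k.
  move=> h; have : a * d1 < d1 * k by lia.
  by rewrite mulnC ltn_pmul2l.
rewrite /a'; case: ifP => h.
  by split; try lia; try (case: hA => hA; [left|right]; lia).
case: hA => hA; last by lia.
have := ak hA => ak'.
have : e = d1 \/ A + e = N by lia.
rewrite mulSn => hE.
by split; try nia; try (case: hE => hE; [left|right]; lia).
Qed.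

Lemma arith_noS {ST A a r k N d1 S : nat} : ST <= A + a * r -> a <= k -> A < N ->
  N + k * r <= S -> S <= ST -> False.
Proof. move=> *; nia. Qed.

Lemma arith_xe {u e d1 R : nat} : e = minn R (minn d1 u) -> minn (u - e) (d1 - e) + e <= d1.
Proof. move=> *; lia. Qed.

Section Step.
Variables (F : finFieldType) (n : nat) (C : {set word F n}) (S : {set 'I_n}).
Variables (d1 r N k : nat).
Hypothesis d1pos : 0 < d1.
Hypothesis hN : N = d1 * k.
Hypothesis hS : N + k * r <= #|S|.
Hypothesis loc : forall i : 'I_n, exists J : {set 'I_n},
    [/\ i \in J, #|J| <= r + d1 & min_dist_ge C J d1.+1].

Definition det (T A : {set 'I_n}) := forall c c', c \in C -> c' \in C ->
  {in T :\: A, forall i, c i = c' i} -> {in T, forall i, c i = c' i}.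

Definition Inv (T A : {set 'I_n}) (a : nat) := [/\ A \subset S :&: T, det T A, #|A| <= N, a <= k &
  #|S :&: T| <= #|A| + a * r /\ (a * d1 <= #|A| \/ #|A| = N)].

Lemma step T A a : Inv T A a -> #|A| < N ->
  exists T' A' a', Inv T' A' a' /\ #|A| < #|A'|.
Proof.
case=> sAST detTA leAN leak [leST hA] ltAN.
have : ~~ (S \subset T).
  apply/negP => sST; move: leST; rewrite (setIidPl sST) => leST.
  exact: (arith_noS leST leak ltAN hS (leqnn _)).
move=> /subsetPn [i iS iT].
have [J [iJ cJ mdJ]] := loc i.
set U := S :&: J :\: T.
have iU : i \in U by rewrite !inE iS iJ iT.
have U1 : 0 < #|U| by apply/card_gt0P; exists i.
have sUJ : U \subset J by apply/subsetP=> x; rewrite !inE => /and3P[].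
have UJ : #|U| <= r + d1 := leq_trans (subset_leq_card sUJ) cJ.
have UT : forall x, x \in U -> x \notin T by move=> x; rewrite !inE => /and3P[].
have US : forall x, x \in U -> x \in S by move=> x; rewrite !inE => /and3P[].
set e := minn (N - #|A|) (minn d1 #|U|).
have eU : e <= #|U| by apply: leq_trans (geq_minr _ _) (geq_minr _ _).
have he : e = minn (N - #|A|) (minn d1 #|U|) by [].
clearbody e.
have [B sBU cB] := @subset_card_ex _ U e eU.
have cUB : #|U :\: B| = #|U| - e by rewrite (cardsDS sBU) cB.
have xle : minn (#|U| - e) (d1 - e) <= #|U :\: B| by rewrite cUB geq_minl.
have [X sXUB cX] := @subset_card_ex _ (U :\: B) _ xle.
have sXU : X \subset U by apply: subset_trans sXUB (subsetDl _ _).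
have BnX : forall x, x \in B -> x \notin X.
  move=> x xB; apply/negP => /(subsetP sXUB); by rewrite inE xB.
have cAB : #|A :|: B| = #|A| + e.
  rewrite cardsU -cB.
  suff -> : A :&: B = set0 by rewrite cards0 subn0.
  apply/setP=> x; rewrite !inE; apply/negP=> /andP[xA xB].
  have := UT x (subsetP sBU x xB).
  by have := subsetP sAST x xA; rewrite inE => /andP[_ ->].
have cS' : #|S :&: (T :|: (J :\: X))| <= #|S :&: T| + (#|U| - #|X|).
  rewrite -(cardsDS sXU).
  apply: leq_trans _ (cardU_le (S :&: T) (U :\: X)); apply: subset_leq_card.
  apply/subsetP=> x; rewrite !inE.
  case: (x \in S) => //=; case: (x \in T) => //=; rewrite ?orbT //= andbC.
have cXB : #|X| + e <= d1 by rewrite cX; apply: arith_xe he.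
have [H1 H2 H3 H4 H5] := arith_step he cX ltAN U1 UJ leST leak hA hN d1pos.
exists (T :|: (J :\: X)), (A :|: B), (if #|U| - #|X| <= e then a else a.+1).
split; last by rewrite cAB.
split; rewrite ?cAB //.
- apply/subsetP=> x; rewrite inE => /orP[xA|xB].
    move: (subsetP sAST x xA); rewrite !inE => /andP[-> ->] //.
  rewrite !inE (US x (subsetP sBU x xB)) (BnX x xB) /=.
  by rewrite (subsetP sUJ x (subsetP sBU x xB)) orbT.
- move=> c c' cC c'C agr.
  have agT : {in T, forall x, c x = c' x}.
    apply: detTA => // x; rewrite inE => /andP[xA xT]; apply: agr.
    have xnB : x \notin B.
      apply/negP => xB; have := UT x (subsetP sBU x xB); by rewrite xT.
    by rewrite !inE xT (negbTE xA) (negbTE xnB).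
  have agJ : {in J, forall x, c x = c' x}.
    have : restr J c = restr J c'.
      apply/eqP; apply/negPn/negP => neq.
      have := mdJ _ _ cC c'C neq; rewrite /dist_on.
      suff : #|[set x in J | c x != c' x]| <= #|X :|: B|.
        move=> h1 h2; have := leq_trans h2 (leq_trans h1 (cardU_le X B)).
        rewrite cB => h3; have := leq_trans h3 cXB; by rewrite ltnn.
      apply: subset_leq_card; apply/subsetP=> x; rewrite !inE => /andP[xJ].
      apply: contraR; rewrite negb_or => /andP[xX xB]; apply/eqP.
      case xT: (x \in T); first by apply: agT.
      have xnA : x \notin A.
        apply/negP=> xA; have := subsetP sAST x xA; by rewrite inE xT andbF.
      apply: agr; by rewrite !inE xT xJ (negbTE xX) (negbTE xB) (negbTE xnA).
    move=> h x xJ; have := congr1 (fun f : word F n => f x) h.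
    by rewrite !ffunE xJ.
  move=> x; rewrite !inE => /orP[xT|/andP[_ xJ]]; [exact: agT| exact: agJ].
- split; [exact: leq_trans cS' H3 | exact: H4].
Qed.

Lemma iter_step j : exists T A a, Inv T A a /\ (#|A| = N \/ j <= #|A|).
Proof.
elim: j => [|j [T [A [a [I h]]]]].
  exists set0, set0, 0; split; last by right.
  split; rewrite ?sub0set ?cards0 ?mul0n //; first by move=> c c' _ _ _ x; rewrite inE.
  by rewrite setI0 cards0; split => //; left.
have [I1 I2 I3 I4 [I5 I6]] := I.
case: (ltnP #|A| N) => hAN.
  have [T' [A' [a' [I' lt]]]] := step _ _ _ I hAN.
  exists T', A', a'; split => //; right.
  case: h => h; first by lia.
  by apply: leq_ltn_trans lt.
exists T, A, a; split => //; left; lia.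
Qed.

End Step.

Theorem mainTheorem2 (F : finFieldType) (n r delta : nat)
  (C : {set word F n}) (S : {set 'I_n}) (Delta : nat) :
  1 <= r -> 2 <= delta -> has_locality C r delta ->
  0 < Delta -> Delta <= #|S| ->
  exists A T : {set 'I_n},
    [/\ A \subset S :&: T,
        #|A| = (delta - 1) * (Delta %/ (r + delta - 1)),
        #|S :&: T| <= Delta &
        exists psi : word F n -> word F n,
          forall c, c \in C -> restr T c = psi (restr (T :\: A) c)].
Proof.
move=> r1; case: delta => [|d1] // d2 loc D0 DS.
have -> : r + d1.+1 - 1 = r + d1 by lia.
have -> : d1.+1 - 1 = d1 by lia.
have d1pos : 0 < d1 by [].
set k := Delta %/ (r + d1).
have kD : k * (r + d1) <= Delta by apply: leq_trunc_div.
have hS : d1 * k + k * r <= #|S| by lia.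
have loc' : forall i : 'I_n, exists J : {set 'I_n},
    [/\ i \in J, #|J| <= r + d1 & min_dist_ge C J d1.+1].
  move=> i; have [J [iJ cJ mJ]] := loc i; exists J; split => //; lia.
have [T [A [a [[sAST detTA leAN leak [leST hA]] h]]]] :=
  @iter_step F n C S d1 r (d1 * k) k d1pos (erefl _) hS loc' (d1 * k).
have cA : #|A| = d1 * k by case: h => h; lia.
exists A, T; split => //.
  apply: leq_trans leST _; have : a * r <= k * r by apply: leq_mul.
  lia.
exists (fun w => if [pick c in C | restr (T :\: A) c == w] is Some c0
                 then restr T c0 else w).
move=> c cC; case: pickP => [c0 /andP[c0C /eqP e0]|/(_ c)]; last first.
  by rewrite cC eqxx.
apply/ffunP => x; rewrite !ffunE; case: ifP => // xT.
apply: esym; apply: (detTA c0 c) => // y yTA.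
have := congr1 (fun f : word F n => f y) e0; by rewrite !ffunE yTA.
Qed.
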